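(* Let $\mathbf{L}$ be a distributive lattice, $n\ge1$ an integer and $F$ an upset of $\mathbf{L}$. The following are equivalent: (i) $F$ is a prime $n$-filter; (ii) $F$ is a prime upset which is a union of at most $n$ filters; (iii) $F$ is a union of at most $n$ prime filters; (iv) there is a lattice homomorphism $h\colon\mathbf{L}\to\mathbf{2}^n$ with $F=h^{-1}[P_n]$, where $\mathbf{2}^n$ is the Boolean lattice with $n$ atoms (the $n$-th power of the two-element lattice $0<1$) and $P_n$ is the set of its non-zero elements.
   Context: For a set $X$, $Y\subseteq_n X$ means $Y$ is a non-empty subset of $X$ with $|Y|\le n$. An $n$-filter on a lattice is an upset $F$ such that for every non-empty finite $X\subseteq F$: if $\bigwedge Y\in F$ for every $Y\subseteq_n X$ then $\bigwedge X\in F$. A filter is a $1$-filter, i.e. an upset closed under binary meets (the empty set and the whole lattice count as filters). An upset $F$ is prime if $a\vee b\in F$ implies $a\in F$ or $b\in F$; a prime $n$-filter (prime filter) is an $n$-filter (filter) which is a prime upset. Lattice homomorphisms need not preserve bounds. *)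

(* Defs.v *)
From mathcomp Require Import all_boot all_order.
Set Implicit Arguments. Unset Strict Implicit. Unset Printing Implicit Defensive.
Import Order.TTheory.
Local Open Scope order_scope.

Section Defs.
Context {d : Order.disp_t} {L : latticeType d}.

Definition nmeet (x : L) (s : seq L) : L := foldl Order.meet x s.

Definition upset (F : L -> Prop) : Prop :=
  forall a b : L, F a -> a <= b -> F b.

(* n-filter: non-empty finite X = x :: s ⊆ F; Y ⊆_n X is a non-empty
   list y :: t of at most n elements of X. *)
Definition nfilter (n : nat) (F : L -> Prop) : Prop :=
  upset F /\
  forall (x : L) (s : seq L),
    (forall z, z \in x :: s -> F z) ->
    (forall (y : L) (t : seq L), (size (y :: t) <= n)%N ->
        {subset y :: t <= x :: s} -> F (nmeet y t)) ->
    F (nmeet x s).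

Definition is_filter (F : L -> Prop) : Prop := nfilter 1 F.

Definition prime_upset (F : L -> Prop) : Prop :=
  upset F /\ forall a b : L, F (a `|` b) -> F a \/ F b.

Definition prime_nfilter (n : nat) (F : L -> Prop) : Prop :=
  nfilter n F /\ prime_upset F.

Definition prime_filter (F : L -> Prop) : Prop :=
  is_filter F /\ prime_upset F.

Definition union_of (k : nat) (G : 'I_k -> L -> Prop) (F : L -> Prop) : Prop :=
  forall a : L, F a <-> exists i : 'I_k, G i a.

End Defs.

(* The Boolean lattice 2^n with n atoms is represented as the powerset
   lattice {set 'I_n} (meet = :&:, join = :|:, bottom = set0).
   A lattice homomorphism need not preserve bounds. *)
Definition lattice_hom_to_2n {d : Order.disp_t} {L : latticeType d} (n : nat)
  (h : L -> {set 'I_n}) : Prop :=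
  forall a b : L, h (Order.meet a b) = h a :&: h b /\ h (Order.join a b) = h a :|: h b.

Definition P_n (n : nat) : {set 'I_n} -> Prop := fun u => u != set0.

(* Main.v *)
From Stdlib Require Import Classical ClassicalDescription IndefiniteDescription.
Require Import Defs.
From mathcomp Require Import all_boot all_order.
Set Implicit Arguments. Unset Strict Implicit. Unset Printing Implicit Defensive.
Import Order.TTheory.
Local Open Scope order_scope.

Definition pb (P : Prop) : bool := if excluded_middle_informative P then true else false.
Lemma pbP (P : Prop) : reflect P (pb P).
Proof. rewrite /pb; case: excluded_middle_informative => h; by constructor. Qed.

Lemma foldl_join_ge (d : Order.disp_t) (L : latticeType d) (s : seq L) (x : L) :
  x <= foldl Order.join x s /\ forall z, z \in s -> z <= foldl Order.join x s.
Proof.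
elim: s x => [|w s IH] x /=; first by split.
have [h1 h2] := IH (x `|` w); split.
  apply: (le_trans _ h1); exact: leUl.
move=> z; rewrite inE => /orP [/eqP -> | zs]; last exact: h2.
apply: (le_trans _ h1); exact: leUr.
Qed.

Lemma foldl_meet_le (d : Order.disp_t) (L : latticeType d) (s : seq L) (x : L) :
  foldl Order.meet x s <= x /\ forall z, z \in s -> foldl Order.meet x s <= z.
Proof.
elim: s x => [|w s IH] x /=; first by split.
have [h1 h2] := IH (x `&` w); split.
  apply: (le_trans h1); exact: leIl.
move=> z; rewrite inE => /orP [/eqP -> | zs]; last exact: h2.
apply: (le_trans h1); exact: leIr.
Qed.

Lemma foldl_meet_glb (d : Order.disp_t) (L : latticeType d) (s : seq L) (x b : L) :
  (forall z, z \in x :: s -> b <= z) -> b <= foldl Order.meet x s.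
Proof.
elim: s x => [|w s IH] x /= H; first by apply: H; rewrite inE eqxx.
apply: IH => z; rewrite inE => /orP [/eqP -> | zs].
  by rewrite lexI !H // !inE eqxx ?orbT.
by apply: H; rewrite !inE zs !orbT.
Qed.

Lemma meet_closed_filter (d : Order.disp_t) (L : latticeType d) (G : L -> Prop) :
  upset G -> (forall a b, G a -> G b -> G (a `&` b)) -> is_filter G.
Proof.
move=> uG mG; split=> // x s H _.
elim: s x H => [|w s IH] x H /=; first by apply: H; rewrite inE eqxx.
apply: IH => z; rewrite inE => /orP [/eqP -> | zs].
  by apply: mG; apply: H; rewrite !inE eqxx ?orbT.
by apply: H; rewrite !inE zs !orbT.
Qed.

Lemma filter_meet (d : Order.disp_t) (L : latticeType d) (G : L -> Prop) a b :
  is_filter G -> G a -> G b -> G (a `&` b).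
Proof.
move=> [_ H] Ga Gb; apply: (H a [:: b]).
  by move=> z; rewrite !inE => /orP [/eqP -> | /eqP ->].
move=> y [|? ?] //= _ sub; have := sub y; rewrite !inE eqxx => /(_ isT).
by move=> /orP [/eqP -> | /eqP ->].
Qed.

Lemma nfilter_all (d : Order.disp_t) (L : latticeType d) (G : L -> Prop) x s :
  is_filter G -> (forall z, z \in x :: s -> G z) -> G (nmeet x s).
Proof.
move=> [_ H] Hs; apply: H => // y [|? ?] //= _ sub; apply: Hs; apply: sub.
by rewrite inE eqxx.
Qed.

Lemma P3toP2 (d : Order.disp_t) (L : latticeType d) (n : nat) (F : L -> Prop) :
  upset F ->
  (exists k (G : 'I_k -> L -> Prop),
       (k <= n)%N /\ (forall i, prime_filter (G i)) /\ union_of G F) ->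
  prime_upset F /\
      exists k (G : 'I_k -> L -> Prop),
        (k <= n)%N /\ (forall i, is_filter (G i)) /\ union_of G F.
Proof.
move=> uF [k [G [kn [pG uG]]]]; split; last first.
  by exists k, G; split=> //; split=> // i; case: (pG i).
split=> // a b /uG [i Gi]; have [_ [_ pr]] := pG i.
by case: (pr _ _ Gi) => h; [left|right]; apply/uG; exists i.
Qed.

Lemma P2toP1 (d : Order.disp_t) (L : latticeType d) (n : nat) (F : L -> Prop) :
  (prime_upset F /\
      exists k (G : 'I_k -> L -> Prop),
        (k <= n)%N /\ (forall i, is_filter (G i)) /\ union_of G F) ->
  prime_nfilter n F.
Proof.
move=> [pF [k [G [kn [fG uG]]]]]; split=> //; split; first by case: pF.
move=> x s Hs Hsub; apply: NNPP => nF.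
have H1 : forall i, exists z, z \in x :: s /\ ~ G i z.
  move=> i; apply: NNPP => nz; apply: nF; apply/uG; exists i.
  apply: (@nfilter_all _ _ (G i)); first exact: fG; move=> z zin; apply: NNPP => nGz; apply: nz; by exists z.
pose f i := proj1_sig (constructive_indefinite_description _ (H1 i)).
have fP i : f i \in x :: s /\ ~ G i (f i).
  exact: (proj2_sig (constructive_indefinite_description _ (H1 i))).
case E: (map f (enum 'I_k)) => [|y t].
  have : size (map f (enum 'I_k)) = k by rewrite size_map size_enum_ord.
  rewrite E => k0; move: (Hs x); rewrite inE eqxx => /(_ isT) /uG [i _].
  by case: i; rewrite -k0.
have sz : (size (y :: t) <= n)%N by rewrite -E size_map size_enum_ord.
have sub : {subset y :: t <= x :: s}.
  by move=> z; rewrite -E => /mapP [i _ ->]; case: (fP i).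
have /uG [i Gi] := Hsub y t sz sub.
case: (fP i) => _; apply; case: pF => upF _; apply: (proj1 (fG i) _ _ Gi).
have [_ h] := foldl_meet_le t y.
have fi : f i \in y :: t by rewrite -E map_f // mem_enum.
move: fi; rewrite inE => /orP [/eqP -> | ft]; last exact: h.
exact: (proj1 (foldl_meet_le t y)).
Qed.

Lemma P3toP4 (d : Order.disp_t) (L : distrLatticeType d) (n : nat) (F : L -> Prop) :
  (exists k (G : 'I_k -> L -> Prop),
       (k <= n)%N /\ (forall i, prime_filter (G i)) /\ union_of G F) ->
  exists h : L -> {set 'I_n},
       lattice_hom_to_2n h /\ forall a : L, F a <-> P_n (h a).
Proof.
move=> [k [G [kn [pG uG]]]].
exists (fun a => [set i : 'I_n | pb (exists j : 'I_k, nat_of_ord j = nat_of_ord i /\ G j a)]).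
split.
  move=> a b; split; apply/setP => i; rewrite !inE.
    apply/pbP/andP.
      move=> [j [ji Gj]]; have [[uGj _] _] := pG j.
      by split; apply/pbP; exists j; split=> //; apply: (uGj _ _ Gj); rewrite ?leIl ?leIr.
    move=> [/pbP [j [ji Gj]] /pbP [j' [ji' Gj']]].
    have ejj : j = j' by apply: val_inj; rewrite /= ji ji'.
    subst j'; exists j; split=> //; apply: filter_meet => //; exact: (proj1 (pG j)).
  apply/pbP/orP.
    move=> [j [ji Gj]]; have [_ [_ pr]] := pG j.
    by case: (pr _ _ Gj) => h; [left|right]; apply/pbP; exists j.
  move=> [/pbP [j [ji Gj]] | /pbP [j [ji Gj]]]; exists j; split=> //;
    by have [[uGj _] _] := pG j; apply: (uGj _ _ Gj); rewrite ?leUl ?leUr.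
move=> a; rewrite /P_n; split.
  move=> /uG [j Gj]; apply/set0Pn; exists (widen_ord kn j); rewrite inE.
  by apply/pbP; exists j.
move=> /set0Pn [i]; rewrite inE => /pbP [j [_ Gj]]; apply/uG; by exists j.
Qed.

Lemma P4toP3 (d : Order.disp_t) (L : distrLatticeType d) (n : nat) (F : L -> Prop) :
  (exists h : L -> {set 'I_n},
       lattice_hom_to_2n h /\ forall a : L, F a <-> P_n (h a)) ->
  exists k (G : 'I_k -> L -> Prop),
       (k <= n)%N /\ (forall i, prime_filter (G i)) /\ union_of G F.
Proof.
move=> [h [hh hF]]; exists n, (fun i a => i \in h a); split=> //; split.
  move=> i; have up : upset (fun a => i \in h a).
    move=> a b ha /join_idPr eab; rewrite -eab; have [_ ->] := hh a b.
    by rewrite inE ha.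
  split; first apply: meet_closed_filter => // a b ha hb.
    by have [-> _] := hh a b; rewrite inE ha hb.
  by split=> // a b; have [_ ->] := hh a b; rewrite inE => /orP [] ?; [left|right].
move=> a; rewrite hF /P_n; split; first by move/set0Pn.
by move=> ?; apply/set0Pn.
Qed.

Definition fam (d : Order.disp_t) (L : latticeType d) (F : L -> Prop) (s : seq L) :=
  (forall x, x \in s -> F x) /\
  (forall x y, x \in s -> y \in s -> x <> y -> ~ F (x `&` y)) /\ uniq s.

Lemma join_split (d : Order.disp_t) (L : distrLatticeType d) (F : L -> Prop) :
  prime_upset F -> forall s x y, F (y `&` foldl Order.join x s) ->
  F (y `&` x) \/ exists2 z, z \in s & F (y `&` z).
Proof.
move=> [uF pF]; elim=> [|w s IH] x y /=; first by left.
move=> /IH [|[z zs Fz]]; last by right; exists z => //; rewrite inE zs orbT.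
rewrite meetUr => /pF [h|h]; first by left.
by right; exists w => //; rewrite inE eqxx.
Qed.

Lemma nF_le (d : Order.disp_t) (L : latticeType d) (F : L -> Prop) x y :
  upset F -> ~ F y -> x <= y -> ~ F x.
Proof. by move=> uF nFy xy Fx; apply: nFy; apply: uF Fx xy. Qed.

Lemma fam_bound (d : Order.disp_t) (L : distrLatticeType d) (n : nat) (F : L -> Prop) s :
  (0 < n)%N -> prime_nfilter n F -> fam F s -> (size s <= n)%N.
Proof.
move=> n0 [nf pu] [sF [sI su]].
rewrite leqNgt; apply/negP => big.
case: s sF sI su big => [//|x0 s'] sF sI su big.
set s0 := x0 :: s' in sF sI su big.
pose a i := nth x0 s0 i.
have aF : forall i, (i < n.+1)%N -> F (a i).
  by move=> i ilt; apply: sF; apply: mem_nth; apply: leq_trans big.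
have aI : forall i j, (i < n.+1)%N -> (j < n.+1)%N -> i <> j -> ~ F (a i `&` a j).
  move=> i j il jl ij; apply: sI; try (apply: mem_nth; apply: leq_trans big => //).
  move=> /eqP; rewrite nth_uniq //; try (apply: leq_trans big => //).
  by move/eqP.
pose hd j := if j == 0%N then 1%N else 0%N.
have hdP : forall j, (hd j < n.+1)%N /\ hd j != j.
  move=> j; rewrite /hd; case: eqP => [->|/eqP jn]; split => //; by rewrite eq_sym.
pose c j := foldl Order.join (a (hd j)) (map a [seq i <- iota 0 n.+1 | i != j]).
have cge : forall j k, (k < n.+1)%N -> k != j -> a k <= c j.
  move=> j k kl kj; apply: (proj2 (foldl_join_ge _ _)).
  by apply: map_f; rewrite mem_filter kj mem_iota.
have csplit : forall j y, F (y `&` c j) ->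
    exists i, [/\ (i < n.+1)%N, i != j & F (y `&` a i)].
  move=> j y /(join_split pu) [h|[z]]; first by exists (hd j); case: (hdP j).
  by move=> /mapP [i]; rewrite mem_filter mem_iota => /andP [ij il] -> Fz; exists i.
have uF : upset F by case: pu.
have cF : forall j, F (c j).
  move=> j; apply: (uF _ _ (aF _ (proj1 (hdP j)))); exact: (proj1 (foldl_join_ge _ _)).
pose M := nmeet (c 0%N) (map c (iota 1 n)).
have eX : c 0%N :: map c (iota 1 n) = map c (iota 0 n.+1) by [].
have MF : F M.
  apply: (proj2 nf); first by move=> z; rewrite eX => /mapP [j _ ->]; exact: cF.
  move=> y t sz sub.
  pose J := map (fun w => index w (map c (iota 0 n.+1))) (y :: t).
  have : ~~ all (fun k => k \in J) (iota 0 n.+1).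
    apply/negP => /allP H; have := uniq_leq_size (iota_uniq 0 n.+1) H.
    by rewrite size_iota size_map => /leq_trans /(_ sz); rewrite ltnn.
  case/allPn => k; rewrite mem_iota /= => kl kJ.
  apply: (uF _ _ (aF k kl)); apply: foldl_meet_glb => z zin.
  have zX : z \in map c (iota 0 n.+1) by rewrite -eX; apply: sub.
  have jl : (index z (map c (iota 0 n.+1)) < n.+1)%N.
    by rewrite -{2}(size_iota 0 n.+1) -(size_map c) index_mem.
  rewrite -(nth_index (c 0%N) zX) (nth_map 0%N) ?size_iota // nth_iota // add0n.
  apply: cge => //; apply/eqP => ejk; move: kJ; rewrite ejk.
  by rewrite (map_f (fun w => index w (map c (iota 0 n.+1))) zin).
have Mle : forall j, (j < n.+1)%N -> M <= c j.
  move=> j jl; have : c j \in c 0%N :: map c (iota 1 n).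
    by rewrite eX map_f // mem_iota.
  rewrite inE => /orP [/eqP ->|cj]; first exact: (proj1 (foldl_meet_le _ _)).
  exact: (proj2 (foldl_meet_le _ _)).
have [i0 [i0l _ F0]] : exists i, [/\ (i < n.+1)%N, i != 0%N & F (M `&` a i)].
  by apply: csplit; rewrite (meet_idPl (Mle 0%N isT)).
have [i1 [i1l i10 F1]] : exists i, [/\ (i < n.+1)%N, i != i0 & F ((M `&` a i0) `&` a i)].
  apply: csplit; rewrite (meet_idPl _) //; apply: le_trans (Mle _ i0l); exact: leIl.
apply: (aI i0 i1 i0l i1l); first by move=> e; move: i10; rewrite e eqxx.
apply: (uF _ _ F1); rewrite lexI; apply/andP; split.
  by apply: le_trans (leIl _ _) _; exact: leIr.
exact: leIr.
Qed.

Lemma neq_of_nF (d : Order.disp_t) (L : latticeType d) (F : L -> Prop) x y :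
  F x -> ~ F (x `&` y) -> x != y.
Proof. by move=> Fx nF; apply/eqP => e; apply: nF; rewrite e meetxx -e. Qed.

Lemma P1toP3 (d : Order.disp_t) (L : distrLatticeType d) (n : nat) (F : L -> Prop) :
  (0 < n)%N -> prime_nfilter n F ->
  exists k (G : 'I_k -> L -> Prop),
       (k <= n)%N /\ (forall i, prime_filter (G i)) /\ union_of G F.
Proof.
move=> n0 pnF; have [nf pu] := pnF; have [uF pF] := pu.
pose P m := pb (exists s, fam F s /\ size s = m).
have exP : exists m, P m by exists 0%N; apply/pbP; exists [::]; split=> //.
have ubP : forall m, P m -> (m <= n)%N.
  by move=> m /pbP [s [fs <-]]; apply: fam_bound fs.
case: (ex_maxnP exP ubP) => m /pbP [s [fs sm]] mmax.
have smax : forall s', fam F s' -> (size s' <= size s)%N.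
  by move=> s' fs'; rewrite sm; apply: mmax; apply/pbP; exists s'.
have [sF [sI su]] := fs.
have key : forall a u z, a \in s -> F (u `&` a) -> F (z `&` a) -> F ((u `&` z) `&` a).
  move=> a u z as_ Fu Fz; apply: NNPP => nF.
  set p := u `&` a; set q := z `&` a.
  have npq : ~ F (p `&` q).
    apply: (nF_le uF nF); rewrite lexI; apply/andP; split.
      by apply: leI2; exact: leIl.
    by apply: le_trans (leIr _ _) _; exact: leIr.
  have remP : forall w, w \in rem a s -> w \in s /\ w != a.
    by move=> w; rewrite mem_rem_uniq // inE => /andP [].
  have nw : forall w, w \in rem a s -> ~ F (p `&` w) /\ ~ F (q `&` w).
    move=> w /remP [ws wa]; have naw : ~ F (a `&` w).
      by apply: sI => // e; move: wa; rewrite e eqxx.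
    by split; apply: (nF_le uF naw); apply: leI2 => //; exact: leIr.
  have fs' : fam F (p :: q :: rem a s).
    split; first by move=> x; rewrite !inE => /orP [/eqP ->|/orP [/eqP ->| /remP [xs _]]] //; apply: sF.
    split.
      move=> x y; rewrite !inE => /orP [/eqP ->|/orP [/eqP ->| xr]] /orP [/eqP ->|/orP [/eqP ->| yr]] //;
        try (by move=> _; case: (nw _ yr)); try (by move=> _; rewrite meetC; case: (nw _ xr)).
      - by move=> _; rewrite meetC.
      - by move=> xy; case: (remP _ xr) => xs _; case: (remP _ yr) => ys _; apply: sI.
    rewrite /= rem_uniq // andbT !inE negb_or; apply/andP; split; first (apply/andP; split).
    - exact: (neq_of_nF Fu npq).
    - by apply/negP => /(nw _) [/(neq_of_nF Fu) /negP].
    - by apply/negP => /(nw _) [_ /(neq_of_nF Fz) /negP].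
  have := smax _ fs'; rewrite /= size_rem //.
  have s0 : (0 < size s)%N by move: as_; case: (s).
  by rewrite prednK // ltnn.
pose G (i : 'I_(size s)) (x : L) := F (x `&` tnth (in_tuple s) i).
have ts : forall i, tnth (in_tuple s) i \in s by move=> i; apply: mem_tnth.
have toT : forall y, y \in s -> exists i, y = tnth (in_tuple s) i.
  by move=> y ys; apply/tnthP.
exists (size s), G; split; first by rewrite sm; apply: ubP; apply/pbP; exists s.
split.
  move=> i; have upG : upset (G i).
    by move=> x x' Gx le; apply: (uF _ _ Gx); apply: leI2.
  split; first apply: meet_closed_filter => // x y Gx Gy; first exact: key.
  split=> // x y; rewrite /G meetUl => /pF [h|h]; by [left|right].
move=> x; split; last first.
  by move=> [i Gi]; apply: (uF _ _ Gi); exact: leIl.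
move=> Fx; apply: NNPP => nG.
have nG' : forall y, y \in s -> ~ F (x `&` y).
  by move=> y /toT [i ->] h; apply: nG; exists i.
have fx : fam F (x :: s).
  split; first by move=> y; rewrite inE => /orP [/eqP ->|/sF].
  split.
    move=> y w; rewrite !inE => /orP [/eqP ->|ys] /orP [/eqP ->|ws] //.
    - by move=> _; apply: nG'.
    - by move=> _; rewrite meetC; apply: nG'.
    - by apply: sI.
  rewrite /= su andbT; apply/negP => xs; exact: (nG' _ xs) (eq_ind_r F Fx (meetxx x)).
by have := smax _ fx; rewrite /= ltnn.
Qed.

Theorem mainTheorem5 (d : Order.disp_t) (L : distrLatticeType d) (n : nat)
  (F : L -> Prop) :
  (0 < n)%N -> upset F ->
  (prime_nfilter n F <->
     (prime_upset F /\
      exists k (G : 'I_k -> L -> Prop),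
        (k <= n)%N /\ (forall i, is_filter (G i)) /\ union_of G F)) /\
  (prime_nfilter n F <->
     exists k (G : 'I_k -> L -> Prop),
       (k <= n)%N /\ (forall i, prime_filter (G i)) /\ union_of G F) /\
  (prime_nfilter n F <->
     exists h : L -> {set 'I_n},
       lattice_hom_to_2n h /\ forall a : L, F a <-> P_n (h a)).
Proof.
move=> n0 uF.
have h13 := @P1toP3 d L n F n0.
split; [|split]; split.
- by move=> H; apply: P3toP2 => //; apply: h13.
- by move=> H; apply: P2toP1.
- exact: h13.
- by move=> H; apply: P2toP1; apply: (P3toP2 uF).
- by move=> H; apply: P3toP4; apply: h13.
- by move=> H; apply: P2toP1; apply: (P3toP2 uF); apply: P4toP3.
Qed.
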